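(* Let $(W,S)$ be a Coxeter system with $S$ finite, and let $\mathcal{R}_W\subseteq S$ be a complete set of representatives of the $W$-conjugacy classes of elements of $Q_W$, with $c(W)$ the number of these classes. Then the abelianization $\operatorname{Ad}(Q_W)_{\mathrm{Ab}}$ is the free abelian group with basis $\{[e_s]\mid s\in\mathcal{R}_W\}$. In particular $\operatorname{Ad}(Q_W)_{\mathrm{Ab}}\cong\mathbb{Z}^{c(W)}$.
   Context: A Coxeter system $(W,S)$: $S$ finite, $m:S\times S\to\mathbb{N}\cup\{\infty\}$ with $m(s,s)=1$, $2\le m(s,t)=m(t,s)\le\infty$ for $s\ne t$, $W=\langle s\in S\mid (st)^{m(s,t)}=1\ (m(s,t)<\infty)\rangle$. The Coxeter quandle is $Q_W=\bigcup_{w\in W}w^{-1}Sw$ with $x\ast y=yxy$, and $\operatorname{Ad}(Q_W)=\langle e_x\ (x\in Q_W)\mid e_y^{-1}e_xe_y=e_{x\ast y}\rangle$. For a group $G$, $G_{\mathrm{Ab}}=G/[G,G]$ and $[g]$ denotes the image of $g$ in $G_{\mathrm{Ab}}$. *)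

(* Defs.v *)
(* Group presentations are encoded by words in the free
   group together with the word-problem congruence. *)
From mathcomp Require Import all_boot all_order all_algebra.
Set Implicit Arguments. Unset Strict Implicit. Unset Printing Implicit Defensive.

(* a letter (x, b): x if b = false, x^-1 if b = true *)
Definition letter (X : Type) := (X * bool)%type.
Definition word (X : Type) := seq (letter X).
Definition inv_letter (X : Type) (a : letter X) : letter X := (a.1, ~~ a.2).
Definition inv_word (X : Type) (w : word X) : word X := rev (map (@inv_letter X) w).

(** * The group <X | Rel> : u and v represent the same element iff
    pres_eq Rel u v (the congruence generated by free reduction and the
    relators, i.e. u v^-1 lies in the normal closure of Rel). *)
Inductive pres_eq (X : Type) (Rel : word X -> Prop) : word X -> word X -> Prop :=
| pe_refl w : pres_eq Rel w w
| pe_sym u v : pres_eq Rel u v -> pres_eq Rel v u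
| pe_trans u v w : pres_eq Rel u v -> pres_eq Rel v w -> pres_eq Rel u w
| pe_free u v (a : letter X) : pres_eq Rel (u ++ a :: inv_letter a :: v) (u ++ v)
| pe_rel u v r : Rel r -> pres_eq Rel (u ++ r ++ v) (u ++ v).
Arguments pres_eq {X} Rel _ _.

(** * Coxeter matrices: m s t = 0 encodes m(s,t) = infinity *)
Definition coxeter_matrix (S : finType) (m : S -> S -> nat) : Prop :=
  (forall s, m s s = 1%N) /\ (forall s t, m s t = m t s) /\
  (forall s t, s != t -> m s t != 1%N).
Arguments coxeter_matrix {S} m.

Definition coxeter_rel (S : finType) (m : S -> S -> nat) (r : word S) : Prop :=
  exists s t, m s t <> 0%N /\ r = flatten (nseq (m s t) [:: (s, false); (t, false)]).
Arguments coxeter_rel {S} m r.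

Definition W_eq (S : finType) (m : S -> S -> nat) := pres_eq (coxeter_rel m).
Arguments W_eq {S} m.

Definition W_conj (S : finType) (m : S -> S -> nat) (x y : word S) : Prop :=
  exists w : word S, W_eq m y (inv_word w ++ x ++ w).
Arguments W_conj {S} m x y.

Definition inQ (S : finType) (m : S -> S -> nat) (u : word S) : Prop :=
  exists (w : word S) (s : S), W_eq m u (inv_word w ++ [:: (s, false)] ++ w).
Arguments inQ {S} m u.

(* the elements of Q_W (via representatives; representatives of the same
   element of W are identified in Ad(Q_W) by the relators below) *)
Definition QW (S : finType) (m : S -> S -> nat) := {u : word S | inQ m u}.
Arguments QW {S} m.

(* relators of Ad(Q_W) = < e_x (x in Q_W) | e_y^-1 e_x e_y = e_{x*y} >,
   with x * y = y x y; plus e_x = e_x' when x, x' represent the same element *)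
Definition ad_rel (S : finType) (m : S -> S -> nat) (r : word (QW m)) : Prop :=
  (exists x x' : QW m, W_eq m (proj1_sig x) (proj1_sig x') /\ r = [:: (x, false); (x', true)])
  \/
  (exists x y z : QW m, W_eq m (proj1_sig z) (proj1_sig y ++ proj1_sig x ++ proj1_sig y) /\
       r = [:: (y, true); (x, false); (y, false); (z, true)]).
Arguments ad_rel {S} m r.

Definition adab_rel (S : finType) (m : S -> S -> nat) (r : word (QW m)) : Prop :=
  ad_rel m r \/
  exists a b : word (QW m), r = inv_word a ++ inv_word b ++ a ++ b.
Arguments adab_rel {S} m r.

Definition adab_eq (S : finType) (m : S -> S -> nat) := pres_eq (adab_rel m).
Arguments adab_eq {S} m.

Lemma inQ_gen (S : finType) (m : S -> S -> nat) (s : S) : inQ m [:: (s, false)].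
Proof. by exists [::], s; apply: pe_refl. Qed.
Arguments inQ_gen {S} m s.

Definition gen_of (S : finType) (m : S -> S -> nat) (s : S) : QW m :=
  exist _ [:: (s, false)] (inQ_gen m s).
Arguments gen_of {S} m s.

Definition complete_reps (S : finType) (m : S -> S -> nat) (R : {set S}) : Prop :=
  (forall x : word S, inQ m x -> exists2 s, s \in R & W_conj m x [:: (s, false)]) /\
  (forall s t, s \in R -> t \in R -> W_conj m [:: (s, false)] [:: (t, false)] -> s = t).
Arguments complete_reps {S} m R.

(* the word  prod_{s in R} e_s^{f s}  (integer combination of the [e_s]) *)
Definition comb (S : finType) (m : S -> S -> nat) (R : {set S}) (f : S -> int)
  : word (QW m) :=
  flatten [seq nseq `|f s|%N (gen_of m s, (f s < 0)%R) | s <- enum R].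

Arguments comb {S} m R f.

(* Main.v *)
Require Import Defs.
From mathcomp Require Import all_boot all_order all_algebra zify.
From Stdlib Require Import ClassicalEpsilon.
Set Implicit Arguments. Unset Strict Implicit. Unset Printing Implicit Defensive.
Import Order.TTheory GRing.Theory Num.Theory.


Lemma pe_catl X (Rel : word X -> Prop) (a u v : word X) :
  pres_eq Rel u v -> pres_eq Rel (a ++ u) (a ++ v).
Proof.
elim=> [w|u' v' _ IH|u' v' w' _ IH1 _ IH2|u' v' b|u' v' r Hr].
- exact: pe_refl.
- exact: pe_sym.
- exact: pe_trans IH1 IH2.
- by move: (pe_free Rel (a ++ u') v' b); rewrite !catA.
- by move: (pe_rel (a ++ u') v' Hr); rewrite !catA.
Qed.

Lemma pe_catr X (Rel : word X -> Prop) (b u v : word X) :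
  pres_eq Rel u v -> pres_eq Rel (u ++ b) (v ++ b).
Proof.
elim=> [w|u' v' _ IH|u' v' w' _ IH1 _ IH2|u' v' c|u' v' r Hr].
- exact: pe_refl.
- exact: pe_sym.
- exact: pe_trans IH1 IH2.
- by move: (pe_free Rel u' (v' ++ b) c); rewrite -!catA.
- by move: (pe_rel u' (v' ++ b) Hr); rewrite -!catA.
Qed.

Lemma pe_cat X (Rel : word X -> Prop) (u u' v v' : word X) :
  pres_eq Rel u u' -> pres_eq Rel v v' -> pres_eq Rel (u ++ v) (u' ++ v').
Proof. by move=> H1 H2; apply: pe_trans (pe_catr _ H1) (pe_catl _ H2). Qed.

Lemma inv_word_cat X (u v : word X) : inv_word (u ++ v) = inv_word v ++ inv_word u.
Proof. by rewrite /inv_word map_cat rev_cat. Qed.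

Lemma inv_letterK X (a : letter X) : inv_letter (inv_letter a) = a.
Proof. by case: a => x b; rewrite /inv_letter /= negbK. Qed.

Lemma inv_wordK X (u : word X) : inv_word (inv_word u) = u.
Proof.
by rewrite /inv_word map_rev revK -map_comp (eq_map (@inv_letterK X)) map_id.
Qed.

Lemma inv_word_cons X (a : letter X) u : inv_word (a :: u) = inv_word u ++ [:: inv_letter a].
Proof. by rewrite -cat1s inv_word_cat. Qed.

Lemma pe_cancel_r X (Rel : word X -> Prop) (w : word X) :
  pres_eq Rel (w ++ inv_word w) [::].
Proof.
elim: w => [|a w IH]; first exact: pe_refl.
rewrite inv_word_cons /= catA.
apply: pe_trans (pe_catr _ (pe_catl [:: a] IH)) _.
exact: (pe_free Rel [::] [::] a).
Qed.

Lemma pe_cancel_l X (Rel : word X -> Prop) (w : word X) :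
  pres_eq Rel (inv_word w ++ w) [::].
Proof. by have := pe_cancel_r Rel (inv_word w); rewrite inv_wordK. Qed.

Lemma pe_drop_l X (Rel : word X -> Prop) (u v : word X) :
  pres_eq Rel (u ++ inv_word u ++ v) v.
Proof. by rewrite catA; apply: (pe_catr v (pe_cancel_r Rel u)). Qed.
Lemma pe_drop_l' X (Rel : word X -> Prop) (u v : word X) :
  pres_eq Rel (inv_word u ++ u ++ v) v.
Proof. by rewrite catA; apply: (pe_catr v (pe_cancel_l Rel u)). Qed.


Definition sgn (b : bool) : int := if b then (-1)%R else 1%R.

Lemma block_step X (Rel : word X -> Prop) (g : X) (z : int) (bb : bool) :
  pres_eq Rel ((g, bb) :: nseq `|z|%N (g, (z < 0)%R))
              (nseq `|(z + sgn bb)%R|%N (g, (z + sgn bb < 0)%R)).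
Proof.
case: bb; case: z => n; rewrite /sgn.
- case: n => [|k].
    by rewrite /= ; apply: pe_refl.
  have -> : `|(Posz k.+1 + -1)%R|%N = k by lia.
  have -> : (Posz k.+1 + -1 < 0)%R = false by lia.
  exact: (pe_free Rel [::] _ (g, true)).
- have -> : `|(Negz n + -1)%R|%N = n.+2 by lia.
  have -> : (Negz n + -1 < 0)%R = true by lia.
  have -> : (Negz n < 0)%R = true by lia.
  have -> : `|Negz n|%N = n.+1 by lia.
  exact: pe_refl.
- have -> : `|(Posz n + 1)%R|%N = n.+1 by lia.
  have -> : (Posz n + 1 < 0)%R = false by lia.
  have -> : (Posz n < 0)%R = false by lia.
  exact: pe_refl.
- have -> : `|(Negz n + 1)%R|%N = n by lia.
  have -> : (Negz n < 0)%R = true by lia.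
  have -> : `|Negz n|%N = n.+1 by lia.
  have -> : (Negz n + 1 < 0)%R = (0 < n)%N by lia.
  case: n => [|k] /=; first exact: (pe_free Rel [::] _ (g, false)).
  exact: (pe_free Rel [::] _ (g, false)).
Qed.

Local Open Scope ring_scope.


Definition phi (X : Type) (S : eqType) (cls : X -> S) (u : word X) (s : S) : int :=
  \sum_(a <- u) (if cls a.1 == s then sgn a.2 else 0).

Lemma phi_cat X (S : eqType) (cls : X -> S) u v s :
  phi cls (u ++ v) s = phi cls u s + phi cls v s.
Proof. by rewrite /phi big_cat. Qed.

Lemma phi_cons X (S : eqType) (cls : X -> S) a u s :
  phi cls (a :: u) s = (if cls a.1 == s then sgn a.2 else 0) + phi cls u s.
Proof. by rewrite /phi big_cons. Qed.

Lemma phi_nil X (S : eqType) (cls : X -> S) s : phi cls [::] s = 0.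
Proof. by rewrite /phi big_nil. Qed.

Lemma phi_inv X (S : eqType) (cls : X -> S) u s :
  phi cls (inv_word u) s = - phi cls u s.
Proof.
elim: u => [|a u IH]; first by rewrite /inv_word /= phi_nil oppr0.
rewrite inv_word_cons phi_cat IH phi_cons phi_cons phi_nil opprD.
case: a => x b /=; case: (cls x == s); case: b => /=; lia.
Qed.

Lemma phi_pres X (S : eqType) (cls : X -> S) (Rel : word X -> Prop)
  (HR : forall r, Rel r -> forall s, phi cls r s = 0) u v s :
  pres_eq Rel u v -> phi cls u s = phi cls v s.
Proof.
elim=> {u v} [w|u v _ IH|u v w _ IH1 _ IH2|u v a|u v r Hr].
- by [].
- by [].
- by rewrite IH1 IH2.
- rewrite !phi_cat !phi_cons; case: a => x b /=.
  case: (cls x == s); case: b => /=; lia.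
- by rewrite !phi_cat (HR r Hr) add0r.
Qed.

Lemma phi_nseq X (S : eqType) (cls : X -> S) k a s :
  phi cls (nseq k a) s = (if cls a.1 == s then sgn a.2 else 0) *+ k.
Proof.
elim: k => [|k IH]; first by rewrite phi_nil mulr0n.
by rewrite /= phi_cons IH mulrS.
Qed.

Lemma phi_flatten X (S : eqType) (T : Type) (g : T -> word X) (cls : X -> S) l s :
  phi cls (flatten (map g l)) s = \sum_(t <- l) phi cls (g t) s.
Proof.
elim: l => [|t l IH]; first by rewrite big_nil phi_nil.
by rewrite /= phi_cat IH big_cons.
Qed.

Lemma sgn_abs (z : int) : sgn (z < 0) *+ `|z|%N = z.
Proof.
case: z => n; rewrite /sgn.
- have -> : (Posz n < 0) = false by lia.
  by rewrite natz.
- have -> : (Negz n < 0) = true by lia.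
  rewrite mulNrn natz; lia.
Qed.


Lemma W_ss (S : finType) (m : S -> S -> nat) (Hmss : forall s, m s s = 1%N) s :
  coxeter_rel m [:: (s,false); (s,false)].
Proof. by exists s, s; rewrite Hmss. Qed.

Lemma W_letter (S : finType) (m : S -> S -> nat) (Hmss : forall s, m s s = 1%N) s b :
  W_eq m [:: (s,b)] [:: (s,false)].
Proof.
case: b; last exact: pe_refl.
apply: pe_trans (pe_sym (pe_rel [:: (s,true)] [::] (W_ss Hmss s))) _.
exact: (pe_free _ [::] [:: (s,false)] (s,true)).
Qed.

Lemma unconj X (Rel : word X -> Prop) (x y w : word X) :
  pres_eq Rel y (inv_word w ++ x ++ w) -> pres_eq Rel x (w ++ y ++ inv_word w).
Proof.
move=> H; apply: pe_sym.
apply: pe_trans (pe_catl w (pe_catr (inv_word w) H)) _.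
rewrite -!catA; apply: pe_trans (pe_drop_l _ _ _) _.
by have := pe_catl x (pe_cancel_r Rel w); rewrite cats0.
Qed.

Lemma conj_lemma X (Rel : word X -> Prop) (x t t' w w' : word X) :
  pres_eq Rel t (inv_word w ++ x ++ w) -> pres_eq Rel t' (inv_word w' ++ x ++ w') ->
  pres_eq Rel t' (inv_word (inv_word w ++ w') ++ t ++ (inv_word w ++ w')).
Proof.
move=> H1 H2; apply: pe_trans H2 _.
rewrite inv_word_cat inv_wordK -!catA; apply: pe_catl.
have := pe_catr w' (unconj H1); rewrite -!catA; exact.
Qed.


Lemma cls_same (S : finType) (m : S -> S -> nat)
  (R : {set S}) (cls : QW m -> S)
  (Hcls : forall x, cls x \in R /\ W_conj m (sval x) [:: (cls x, false)])
  (HR2 : forall s t, s \in R -> t \in R -> W_conj m [:: (s, false)] [:: (t, false)] -> s = t) (x x' : QW m) v :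
  W_eq m (sval x') (inv_word v ++ sval x ++ v) -> cls x = cls x'.
Proof.
move=> H.
have [Rx [w1 H1]] := Hcls x; have [Rx' [w2 H2]] := Hcls x'.
apply: HR2 => //; exists (inv_word w1 ++ (v ++ w2)).
apply: (conj_lemma H1).
apply: pe_trans H2 _; rewrite inv_word_cat -!catA; apply: pe_catl.
have := pe_catr w2 H; rewrite -!catA; exact.
Qed.

Lemma Q_invol (S : finType) (m : S -> S -> nat) (Hmss : forall s, m s s = 1%N) (y : word S) : inQ m y -> W_eq m y (inv_word y).
Proof.
move=> [w [s H]].
have Hyy : W_eq m (y ++ y) [::].
  apply: pe_trans (pe_cat H H) _.
  rewrite -!catA; apply: pe_trans (pe_catl _ (pe_catl _ (pe_drop_l _ _ _))) _.
  apply: pe_trans (pe_catl (inv_word w) (pe_rel [::] w (W_ss Hmss s))) _.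
  exact: pe_cancel_l.
apply: pe_trans (pe_sym (pe_drop_l' _ y y)) _.
by have := pe_catl (inv_word y) Hyy; rewrite cats0.
Qed.

Lemma phi_rel (S : finType) (m : S -> S -> nat) (Hmss : forall s, m s s = 1%N)
  (R : {set S}) (cls : QW m -> S)
  (Hcls : forall x, cls x \in R /\ W_conj m (sval x) [:: (cls x, false)])
  (HR2 : forall s t, s \in R -> t \in R -> W_conj m [:: (s, false)] [:: (t, false)] -> s = t) r : adab_rel m r -> forall s, phi cls r s = 0%R.
Proof.
move=> [[[x [x' [H ->]]]|[x [y [z [H ->]]]]]|[a [b ->]]] s.
- have Hc : cls x' = cls x by apply: (@cls_same S m R cls Hcls HR2 x' x [::]); by rewrite /inv_word /= cats0.
  rewrite !phi_cons phi_nil /= Hc; case: (_ == _) => /=; lia.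
- have Hc : cls x = cls z.
    apply: (@cls_same S m R cls Hcls HR2 x z (sval y)); apply: pe_trans H _.
    apply: pe_catr; exact: (@Q_invol S m Hmss _ (proj2_sig y)).
  rewrite !phi_cons phi_nil /= Hc; case: (cls y == s); case: (cls z == s) => /=; lia.
- rewrite !phi_cat !phi_inv; lia.
Qed.




Lemma adab_comm (S : finType) (m : S -> S -> nat) (a b : word (QW m)) :
  adab_eq m (a ++ b) (b ++ a).
Proof.
have Hr : adab_rel m (inv_word a ++ inv_word b ++ a ++ b) by right; exists a, b.
have := pe_rel (b ++ a) [::] Hr; rewrite !cats0 => H2.
apply: pe_trans _ H2; apply: pe_sym.
rewrite -catA; apply: pe_trans (pe_catl b (pe_drop_l _ a _)) _.
exact: pe_drop_l.
Qed.

Lemma adab_step (S : finType) (m : S -> S -> nat) (x x1 : QW m) s :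
  W_eq m (sval x1) ([:: (s,false)] ++ sval x ++ [:: (s,false)]) ->
  adab_eq m [:: (x,false)] [:: (x1,false)].
Proof.
move=> H; set y := gen_of m s.
have Hr : adab_rel m [:: (y,true);(x,false);(y,false);(x1,true)]
  by left; right; exists x, y, x1.
apply: (@pe_trans _ _ _ [:: (y,false); (y,true);(x,false);(y,false);(x1,true); (x1,false); (y,true)]).
  apply: pe_sym.
  apply: pe_trans (pe_free _ [::] [:: (x,false);(y,false);(x1,true);(x1,false);(y,true)] (y,false)) _.
  apply: pe_trans (pe_free _ [:: (x,false);(y,false)] [:: (y,true)] (x1,true)) _.
  exact: (pe_free _ [:: (x,false)] [::] (y,false)).
apply: pe_trans (pe_rel [:: (y,false)] [:: (x1,false); (y,true)] Hr) _.
apply: pe_trans (adab_comm [:: (y,false)] [:: (x1,false); (y,true)]) _.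
exact: (pe_free _ [:: (x1,false)] [::] (y,true)).
Qed.

Lemma adab_chain (S : finType) (m : S -> S -> nat) (Hmss : forall s, m s s = 1%N) v :
  forall (x y : QW m), W_eq m (sval y) (inv_word v ++ sval x ++ v) ->
  adab_eq m [:: (x,false)] [:: (y,false)].
Proof.
elim: v => [|[s b] v IH] x y H.
  have Hr : adab_rel m [:: (x,false);(y,true)].
    left; left; exists x, y; split => //; apply: pe_sym.
    by move: H; rewrite /inv_word /= cats0.
  apply: pe_trans (pe_sym (pe_free _ [:: (x,false)] [::] (y,true))) _.
  exact: (pe_rel [::] [:: (y,false)] Hr).
have Hx1 : inQ m (inv_letter (s,b) :: sval x ++ [:: (s,b)]).
  case: (proj2_sig x) => w [t Hw]; exists (w ++ [:: (s,b)]), t.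
  rewrite inv_word_cat.
  have := pe_catl [:: inv_letter (s,b)] (pe_catr [:: (s,b)] Hw).
  by rewrite /= -!catA.
pose x1 : QW m := exist _ _ Hx1.
apply: (@pe_trans _ _ _ [:: (x1, false)]); last first.
  apply: IH; move: H; rewrite /x1 /= inv_word_cons -!catA /=.
  by [].
apply: (@adab_step _ _ x x1 s).
rewrite /x1 /=.
have := pe_cat (W_letter Hmss s (~~b)) (pe_catl (sval x) (W_letter Hmss s b)).
by [].
Qed.


Lemma adab_letter (S : finType) (m : S -> S -> nat) (Hmss : forall s, m s s = 1%N)
  (R : {set S})
  (H1 : forall x : word S, inQ m x -> exists2 s, s \in R & W_conj m x [:: (s, false)])
  (x : QW m) b :
  exists2 r, r \in R & adab_eq m [:: (x,b)] [:: (gen_of m r, b)].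
Proof.
have [r Hr [v Hv]] := H1 _ (proj2_sig x).
exists r => //.
have Hf := adab_chain Hmss (x := x) (y := gen_of m r) Hv.
case: b; last exact: Hf.
apply: pe_trans (pe_sym (pe_free _ [:: (x,true)] [::] (gen_of m r, false))) _.
apply: pe_trans (pe_catl [:: (x,true)] (pe_catr [:: (gen_of m r, true)] (pe_sym Hf))) _.
exact: (pe_free _ [::] [:: (gen_of m r, true)] (x, true)).
Qed.

Lemma comb_step (S : finType) (m : S -> S -> nat) (R : {set S}) (f : S -> int) r b :
  r \in R ->
  adab_eq m ((gen_of m r, b) :: comb m R f)
    (comb m R (fun s => if s == r then (f r + sgn b)%R else f s)).
Proof.
move=> Hr; rewrite /comb.
have : r \in enum R by rewrite mem_enum.
move: (enum_uniq (mem R)); move: (enum R) => e Hu Hre.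
case/splitPr: Hre Hu => p q Hu.
have Hp : r \notin p.
  by move: Hu; rewrite cat_uniq /= negb_or => /and4P [_ /andP [H _] _ _]; apply/negP => Hp; move: H; rewrite /has Hp.
have Hq : r \notin q by move: Hu; rewrite cat_uniq /= => /and4P [_ _ H _].
have Ep : forall l, r \notin l ->
  [seq nseq `|(if s == r then (f r + sgn b)%R else f s)|%N
      (gen_of m s, ((if s == r then (f r + sgn b)%R else f s) < 0)%R) | s <- l]
  = [seq nseq `|f s|%N (gen_of m s, (f s < 0)%R) | s <- l].
  elim=> [|t l IH] //=; rewrite in_cons negb_or => /andP [Ht Hl].
  by rewrite IH // eq_sym (negbTE Ht).
rewrite !map_cat !flatten_cat /= eqxx !Ep //.
rewrite -cat1s catA.
apply: pe_trans (pe_catr _ (adab_comm _ _)) _.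
rewrite -catA; apply: pe_catl; rewrite catA.
exact: pe_catr _ (block_step _ _ _ _).
Qed.


Theorem proposition2p4 (S : finType) (m : S -> S -> nat)
  (Hm : coxeter_matrix m) (R : {set S}) (HR : complete_reps m R) :
  (* the [e_s], s in R, generate Ad(Q_W)_Ab ... *)
  (forall u : word (QW m), exists f : S -> int, adab_eq m u (comb m R f)) /\
  (* ... and are Z-linearly independent: a basis, so Ad(Q_W)_Ab = Z^#|R| *)
  (forall f : S -> int, adab_eq m (comb m R f) [::] ->
     forall s, s \in R -> f s = 0%R).
Proof.
have Hmss : forall s, m s s = 1%N by case: Hm.
case: HR => H1 H2; split.
  elim=> [|[x b] u [f Hf]].
    exists (fun _ => 0%R).
    suff -> : comb m R (fun _ => 0%R) = [::] by apply: pe_refl.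
    by rewrite /comb; elim: (enum R).
  have [r Hr Hx] := adab_letter Hmss H1 x b.
  exists (fun s => if s == r then (f r + sgn b)%R else f s).
  apply: pe_trans (comb_step _ _ _ Hr).
  exact: (pe_cat Hx Hf).
move=> f Hf s Hs.
have Hc : forall x : QW m, exists s, s \in R /\ W_conj m (sval x) [:: (s,false)].
  by move=> x; have [t Ht Hw] := H1 _ (proj2_sig x); exists t.
pose cls x := proj1_sig (constructive_indefinite_description _ (Hc x)).
have Hcls : forall x, cls x \in R /\ W_conj m (sval x) [:: (cls x,false)].
  by move=> x; exact: (proj2_sig (constructive_indefinite_description _ (Hc x))).
have := phi_pres (phi_rel Hmss Hcls H2) s Hf.
rewrite phi_nil /comb phi_flatten.
rewrite (eq_big_seq (fun t => if t == s then f t else 0%R)).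
  rewrite (bigD1_seq s) ?mem_enum ?enum_uniq //= eqxx big1 ?addr0 //.
  by move=> t /negbTE ->.
move=> t; rewrite mem_enum => Ht; rewrite phi_nseq /=.
have -> : cls (gen_of m t) = t.
  by apply: esym; apply: H2 Ht (Hcls _).1 (Hcls (gen_of m t)).2.
by case: (t == s); rewrite ?sgn_abs ?mul0rn.
Qed.
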